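(* Let $U=[n,u,E,B]$ satisfy for all $t>0$, $x\in\mathbb{R}^3$ the linear system \begin{equation*} \partial_t n +\gamma \nabla\cdot u =0,\quad \partial_t u+\gamma \nabla n +\beta {E}-\mu\Delta u=0,\quad \partial_t {E} - \nabla \times {B} -\beta u = 0,\quad \partial_t {B} + \nabla \times {E} = 0,\quad \nabla \cdot{E} = -\frac{\beta}{\gamma}n, \ \ \nabla\cdot {B} =0, \end{equation*} with initial data $U|_{t=0}=U_0=[n_0,u_0,E_0,B_0]$. For $k\ne0$ let $\tilde k=k/|k|$ and $\hat u_\perp=-\tilde k\times(\tilde k\times\hat u)=(\mathbf I_3-\tilde k\otimes\tilde k)\hat u$, and likewise $\hat E_\perp,\hat B_\perp$ and their initial values. Then, except for a finite number of values of $|k|$, \begin{equation*} \begin{pmatrix}\hat u_\perp\\ \hat E_\perp\\ \hat B_\perp\end{pmatrix}(t,k)=\mathcal M\big(\beta t,\tfrac{k}{\beta}\big)\begin{pmatrix}\hat u_{0,\perp}\\ \hat E_{0,\perp}\\ \hat B_{0,\perp}\end{pmatrix}(k), \end{equation*} where, in the variables $\tau=\beta t$, $\xi=k/\beta$, the $9\times9$ matrix $\mathcal M(\tau,\xi)=(\mathcal M_{ij})_{1\le i,j\le 3}$ (with $3\times3$ blocks) is given, with $D=(\lambda_1-\lambda_2)(\lambda_2-\lambda_3)(\lambda_3-\lambda_1)$, by \begin{align*} \mathcal{M}_{11} &= \frac{1}{D}\Big[e^{\lambda_1\tau}(-\lambda_1)\tfrac{\lambda_2-\lambda_3}{\lambda_2+\lambda_3}+e^{\lambda_2\tau}(-\lambda_2)\tfrac{\lambda_3-\lambda_1}{\lambda_3+\lambda_1}+e^{\lambda_3\tau}(-\lambda_3)\tfrac{\lambda_1-\lambda_2}{\lambda_1+\lambda_2}\Big]\mathbf{I}_3,\\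 \mathcal{M}_{22} &= \frac{1}{D}\Big[e^{\lambda_1\tau}\lambda_1(\lambda_2^2-\lambda_3^2)+e^{\lambda_2\tau}\lambda_2(\lambda_3^2-\lambda_1^2)+e^{\lambda_3\tau}\lambda_3(\lambda_1^2-\lambda_2^2)\Big]\mathbf{I}_3,\\ \mathcal{M}_{33} &= \frac{1}{D}\Big[e^{\lambda_1\tau}(-|\xi|^2)\tfrac{\lambda_2^2-\lambda_3^2}{\lambda_1}+e^{\lambda_2\tau}(-|\xi|^2)\tfrac{\lambda_3^2-\lambda_1^2}{\lambda_2}+e^{\lambda_3\tau}(-|\xi|^2)\tfrac{\lambda_1^2-\lambda_2^2}{\lambda_3}\Big]\mathbf{I}_3,\\ \mathcal{M}_{12} &= \frac{1}{D}\Big[e^{\lambda_1\tau}\lambda_1(\lambda_2-\lambda_3)+e^{\lambda_2\tau}\lambda_2(\lambda_3-\lambda_1)+e^{\lambda_3\tau}\lambda_3(\lambda_1-\lambda_2)\Big]\mathbf{I}_3,\\ \mathcal{M}_{13} &= \frac{1}{D}\Big[e^{\lambda_1\tau}(\lambda_2-\lambda_3)+e^{\lambda_2\tau}(\lambda_3-\lambda_1)+e^{\lambda_3\tau}(\lambda_1-\lambda_2)\Big]\,i\xi\times,\\ \mathcal{M}_{23} &= \frac{1}{D}\Big[e^{\lambda_1\tau}(\lambda_2^2-\lambda_3^2)+e^{\lambda_2\tau}(\lambda_3^2-\lambda_1^2)+e^{\lambda_3\tau}(\lambda_1^2-\lambda_2^2)\Big]\,i\xi\times, \end{align*} and $\mathcal{M}_{21}=-\mathcal{M}_{12}$,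 $\mathcal{M}_{31}=\mathcal{M}_{13}$, $\mathcal{M}_{32}=-\mathcal{M}_{23}$. Here $\lambda_j=\lambda_j(\xi)$, $j=1,2,3$, are the roots of $z^3+a |\xi|^2 z^2 +(|\xi|^2+1)z+a |\xi|^4=0$, $z\in\mathbb{C}$, with $a=\mu\beta$.
   Context: $\gamma,\beta,\mu>0$ are constants; $\hat f(t,k)=\int_{\mathbb{R}^3}e^{-ik\cdot x}f(t,x)dx$; $\mathbf I_3$ is the $3\times 3$ identity and $i\xi\times$ denotes the linear map $w\mapsto i\xi\times w$ on $\mathbb{C}^3$. *)

(* Defs.v *)
From Stdlib Require Import Reals List.
From Coquelicot Require Import Coquelicot.
Open Scope R_scope.

Definition cexp (z : C) : C :=
  (exp (fst z) * cos (snd z), exp (fst z) * sin (snd z)).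

Definition R3 := (R * R * R)%type.
Definition V3 := (C * C * C)%type.

Definition r1 (k : R3) : R := fst (fst k).
Definition r2 (k : R3) : R := snd (fst k).
Definition r3 (k : R3) : R := snd k.
Definition c1 (v : V3) : C := fst (fst v).
Definition c2 (v : V3) : C := snd (fst v).
Definition c3 (v : V3) : C := snd v.
Definition mkV3 (a b c : C) : V3 := (a, b, c).

Definition rnorm (k : R3) : R := sqrt (r1 k ^ 2 + r2 k ^ 2 + r3 k ^ 2).
Definition rscal (c : R) (k : R3) : R3 := (c * r1 k, c * r2 k, c * r3 k).

Definition cv (k : R3) : V3 := mkV3 (RtoC (r1 k)) (RtoC (r2 k)) (RtoC (r3 k)).

Definition vadd (v w : V3) : V3 :=
  mkV3 (c1 v + c1 w)%C (c2 v + c2 w)%C (c3 v + c3 w)%C.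
Definition vscal (c : C) (v : V3) : V3 :=
  mkV3 (c * c1 v)%C (c * c2 v)%C (c * c3 v)%C.
Definition vopp (v : V3) : V3 := vscal (RtoC (-1)) v.
Definition vsub (v w : V3) : V3 := vadd v (vopp w).
(* bilinear (non-conjugated) dot product, as in k . u *)
Definition vdot (v w : V3) : C :=
  (c1 v * c1 w + c2 v * c2 w + c3 v * c3 w)%C.
Definition vcross (v w : V3) : V3 :=
  mkV3 (c2 v * c3 w - c3 v * c2 w)%C
       (c3 v * c1 w - c1 v * c3 w)%C
       (c1 v * c2 w - c2 v * c1 w)%C.

Definition Ci : C := (0, 1).

Definition icross (xi : R3) (w : V3) : V3 := vscal Ci (vcross (cv xi) w).

Definition perp (k : R3) (v : V3) : V3 :=
  let kt := cv (rscal (/ rnorm k) k) in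
  vsub v (vscal (vdot kt v) kt).

(* The scalar coefficients of the blocks of M(tau, xi); the arguments are
   the three roots l1 l2 l3, tau, and s = |xi|^2. *)
Section Coeffs.
Local Open Scope C_scope.
Variables (l1 l2 l3 : C) (tau : R) (s : R).
Definition Dl : C := (l1 - l2) * (l2 - l3) * (l3 - l1).
Definition ex (l : C) : C := cexp (RtoC tau * l).

Definition m11 : C :=
  (ex l1 * (- l1) * ((l2 - l3) / (l2 + l3))
 + ex l2 * (- l2) * ((l3 - l1) / (l3 + l1))
 + ex l3 * (- l3) * ((l1 - l2) / (l1 + l2))) / Dl.
Definition m22 : C :=
  (ex l1 * l1 * (l2 ^ 2 - l3 ^ 2)
 + ex l2 * l2 * (l3 ^ 2 - l1 ^ 2)
 + ex l3 * l3 * (l1 ^ 2 - l2 ^ 2)) / Dl.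
Definition m33 : C :=
  (ex l1 * (- RtoC s) * ((l2 ^ 2 - l3 ^ 2) / l1)
 + ex l2 * (- RtoC s) * ((l3 ^ 2 - l1 ^ 2) / l2)
 + ex l3 * (- RtoC s) * ((l1 ^ 2 - l2 ^ 2) / l3)) / Dl.
Definition m12 : C :=
  (ex l1 * l1 * (l2 - l3)
 + ex l2 * l2 * (l3 - l1)
 + ex l3 * l3 * (l1 - l2)) / Dl.
Definition m13 : C :=
  (ex l1 * (l2 - l3)
 + ex l2 * (l3 - l1)
 + ex l3 * (l1 - l2)) / Dl.
Definition m23 : C :=
  (ex l1 * (l2 ^ 2 - l3 ^ 2)
 + ex l2 * (l3 ^ 2 - l1 ^ 2)
 + ex l3 * (l1 ^ 2 - l2 ^ 2)) / Dl.
End Coeffs.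

Definition Mapply (l1 l2 l3 : C) (tau : R) (xi : R3) (u0 E0 B0 : V3)
  : V3 * V3 * V3 :=
  let s := rnorm xi ^ 2 in
  let A11 := m11 l1 l2 l3 tau in
  let A22 := m22 l1 l2 l3 tau in
  let A33 := m33 l1 l2 l3 tau s in
  let A12 := m12 l1 l2 l3 tau in
  let A13 := m13 l1 l2 l3 tau in
  let A23 := m23 l1 l2 l3 tau in
  ( vadd (vadd (vscal A11 u0) (vscal A12 E0)) (vscal A13 (icross xi B0)),
    vadd (vadd (vscal (- A12)%C u0) (vscal A22 E0)) (vscal A23 (icross xi B0)),
    vadd (vadd (vscal A13 (icross xi u0)) (vscal (- A23)%C (icross xi E0)))
         (vscal A33 B0) ).

Definition roots_of_cubic (a s : R) (l1 l2 l3 : C) : Prop :=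
  forall z : C,
    (z ^ 3 + RtoC (a * s) * z ^ 2 + RtoC (s + 1) * z + RtoC (a * s ^ 2))%C
    = ((z - l1) * (z - l2) * (z - l3))%C.

(* Fourier-side form of the linear system, hat f(t,k) = int e^{-ik.x} f(t,x) dx,
   so that grad -> i k, div -> i k ., curl -> i k x, Delta -> -|k|^2. *)
Definition ik (k : R3) : V3 := vscal Ci (cv k).

Definition fourier_system (gamma beta mu : R)
  (n : R -> R3 -> C) (u E B : R -> R3 -> V3) : Prop :=
  forall (t : R) (k : R3), 0 < t ->
    is_derive (fun s => n s k) t (- (RtoC gamma * vdot (ik k) (u t k)))%C /\
    is_derive (fun s => u s k) t
      (vopp (vadd (vadd (vscal (RtoC gamma * n t k)%C (ik k))
                        (vscal (RtoC beta) (E t k)))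
                  (vscal (RtoC (mu * rnorm k ^ 2)) (u t k)))) /\
    is_derive (fun s => E s k) t
      (vadd (vcross (ik k) (B t k)) (vscal (RtoC beta) (u t k))) /\
    is_derive (fun s => B s k) t (vopp (vcross (ik k) (E t k))) /\
    vdot (ik k) (E t k) = (- (RtoC (beta / gamma) * n t k))%C /\
    vdot (ik k) (B t k) = RtoC 0.

Definition initial_data {V : UniformSpace} (f : R -> R3 -> V) (f0 : R3 -> V) : Prop :=
  forall k : R3, f 0 k = f0 k /\ filterlim (fun s => f s k) (at_right 0) (locally (f0 k)).

(* Main.v *)
Require Import Defs.
From Stdlib Require Import Reals List.
From Coquelicot Require Import Coquelicot.
Open Scope R_scope.
From Stdlib Require Import Lra Lia Classical.
Require Import Defs.
Open Scope R_scope.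

Lemma is_derive_fst' {U V : NormedModule R_AbsRing} (f : R -> U * V) t (d : U * V) :
  @is_derive R_AbsRing (prod_NormedModule _ U V) f t d ->
  is_derive (fun s => fst (f s)) t (fst d).
Proof.
  intros H. unfold is_derive in *.
  exact (filterdiff_comp' f fst t _ fst H (filterdiff_linear _ is_linear_fst)).
Qed.
Lemma is_derive_snd' {U V : NormedModule R_AbsRing} (f : R -> U * V) t (d : U * V) :
  @is_derive R_AbsRing (prod_NormedModule _ U V) f t d ->
  is_derive (fun s => snd (f s)) t (snd d).
Proof.
  intros H. unfold is_derive in *.
  exact (filterdiff_comp' f snd t _ snd H (filterdiff_linear _ is_linear_snd)).
Qed.

Definition RL (f : R -> R) (l : R) := filterlim f (at_right 0) (locally l).

Lemma fl_fst' {U V : UniformSpace} (f : R -> U * V) l :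
  filterlim f (at_right 0) (locally l) -> filterlim (fun s => fst (f s)) (at_right 0) (locally (fst l)).
Proof.
  intros H. eapply filterlim_comp. exact H.
  destruct l as [a b]. intros P [e He]. exists e. intros [x y] [Hx Hy]. apply He. exact Hx.
Qed.
Lemma fl_snd' {U V : UniformSpace} (f : R -> U * V) l :
  filterlim f (at_right 0) (locally l) -> filterlim (fun s => snd (f s)) (at_right 0) (locally (snd l)).
Proof.
  intros H. eapply filterlim_comp. exact H.
  destruct l as [a b]. intros P [e He]. exists e. intros [x y] [Hx Hy]. apply He. exact Hy.
Qed.

Lemma RL_plus f g a b : RL f a -> RL g b -> RL (fun s => f s + g s) (a + b).
Proof. intros Hf Hg. exact (filterlim_comp_2 f g Rplus Hf Hg (@filterlim_plus _ R_NormedModule a b)). Qed.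
Lemma RL_mul f g a b : RL f a -> RL g b -> RL (fun s => f s * g s) (a * b).
Proof. intros Hf Hg. exact (filterlim_comp_2 f g Rmult Hf Hg (@filterlim_scal _ R_NormedModule a b)). Qed.
Lemma RL_const a : RL (fun _ => a) a.
Proof. apply filterlim_const. Qed.
Lemma RL_ext f g a : (forall s, 0 < s -> f s = g s) -> RL f a -> RL g a.
Proof.
  intros He H. eapply filterlim_ext_loc; [|exact H].
  exists (mkposreal 1 Rlt_0_1). intros y _ Hy. apply He; exact Hy.
Qed.
Lemma RL_cont f : continuous f 0 -> RL f (f 0).
Proof.
  intros Hc P HP. apply Hc in HP. unfold filtermap in HP |- *.
  destruct HP as [e He]. exists e. intros y Hy _. apply He; exact Hy.
Qed.
Lemma RL_unique f a b : RL f a -> RL f b -> a = b.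
Proof.
  intros Ha Hb. apply (@filterlim_locally_unique R R_AbsRing R_NormedModule (at_right 0) _ f a b Ha Hb).
Qed.

Lemma RD_mul (f g : R -> R) t df dg : is_derive f t df -> is_derive g t dg ->
  is_derive (fun s => f s * g s) t (df * g t + f t * dg).
Proof. intros Hf Hg. apply (is_derive_mult f g t df dg Hf Hg). intros; apply Rmult_comm. Qed.
Lemma RD_plus (f g : R -> R) t df dg : is_derive f t df -> is_derive g t dg ->
  is_derive (fun s => f s + g s) t (df + dg).
Proof. intros Hf Hg. apply (is_derive_plus f g t df dg Hf Hg). Qed.
Lemma RD_minus (f g : R -> R) t df dg : is_derive f t df -> is_derive g t dg ->
  is_derive (fun s => f s - g s) t (df - dg).
Proof. intros Hf Hg. apply (is_derive_minus f g t df dg Hf Hg). Qed.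
Lemma RD_scal (f : R -> R) t c df : is_derive f t df -> is_derive (fun s => c * f s) t (c * df).
Proof. intros Hf. apply is_derive_scal. exact Hf. Qed.
Lemma RD_eq (f : R -> R) t (d d' : R) : is_derive f t d -> d = d' -> is_derive f t d'.
Proof. intros H ->; exact H. Qed.

Lemma const_pos (F : R -> R) : (forall t, 0 < t -> is_derive F t 0) ->
  forall t, 0 < t -> F t = F 1.
Proof.
  intros H t Ht. destruct (Rtotal_order t 1) as [h|[h|h]].
  - apply (eq_is_derive F t 1); [|exact h]. intros x Hx. apply H. lra.
  - subst; reflexivity.
  - symmetry. apply (eq_is_derive F 1 t); [|exact h]. intros x Hx. apply H. lra.
Qed.

Definition CD (g : R -> C) t (d : C) :=
  is_derive (fun s => fst (g s)) t (fst d) /\ is_derive (fun s => snd (g s)) t (snd d).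
Definition CL (g : R -> C) (l : C) := RL (fun s => fst (g s)) (fst l) /\ RL (fun s => snd (g s)) (snd l).

Lemma ode1 (g : R -> C) (g0 w : C) :
  (forall t, 0 < t -> CD g t (w * g t)%C) -> CL g g0 ->
  forall t, 0 < t -> g t = (cexp (RtoC t * w) * g0)%C.
Proof.
  intros HD [HL1 HL2].
  destruct w as [a b]. destruct g0 as [x0 y0]. simpl in HL1, HL2.
  set (x := fun s => fst (g s)). set (y := fun s => snd (g s)).
  set (F1 := fun s => exp (- a * s) * cos (b * s) * x s + exp (-a * s) * sin (b * s) * y s).
  set (F2 := fun s => exp (- a * s) * cos (b * s) * y s - exp (-a * s) * sin (b * s) * x s).
  assert (Hh1 : forall s, is_derive (fun s => exp (- a * s) * cos (b * s)) s
     (-a * exp (-a*s) * cos (b*s) - b * exp (-a*s) * sin (b*s))).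
  { intros s. auto_derive; [exact I| ring]. }
  assert (Hh2 : forall s, is_derive (fun s => exp (- a * s) * sin (b * s)) s
     (-a * exp (-a*s) * sin (b*s) + b * exp (-a*s) * cos (b*s))).
  { intros s. auto_derive; [exact I| ring]. }
  assert (Hx : forall t, 0 < t -> is_derive x t (a * x t - b * y t)).
  { intros t Ht. destruct (HD t Ht) as [H1 _]. exact H1. }
  assert (Hy : forall t, 0 < t -> is_derive y t (b * x t + a * y t)).
  { intros t Ht. destruct (HD t Ht) as [_ H2]. simpl in H2. eapply RD_eq; [exact H2|]. unfold x, y; ring. }
  assert (C1 : forall t, 0 < t -> F1 t = F1 1).
  { apply const_pos. intros t Ht. unfold F1.
    eapply RD_eq. apply RD_plus; apply RD_mul; auto.
    cbv beta; ring. }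
  assert (C2 : forall t, 0 < t -> F2 t = F2 1).
  { apply const_pos. intros t Ht. unfold F2.
    eapply RD_eq. apply RD_minus; apply RD_mul; auto.
    cbv beta; ring. }
  assert (Hc1 : continuous (fun s => exp (- a * s) * cos (b * s)) 0).
  { exact (ex_derive_continuous (fun s => exp (- a * s) * cos (b * s)) 0 (ex_intro _ _ (Hh1 0))). }
  assert (Hc2 : continuous (fun s => exp (- a * s) * sin (b * s)) 0).
  { exact (ex_derive_continuous (fun s => exp (- a * s) * sin (b * s)) 0 (ex_intro _ _ (Hh2 0))). }
  assert (E0 : exp (- a * 0) = 1) by (replace (-a*0) with 0 by ring; apply exp_0).
  assert (L1 : RL F1 x0).
  { replace x0 with ((exp (- a * 0) * cos (b * 0)) * x0 + (exp (- a * 0) * sin (b * 0)) * y0).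
    2:{ rewrite E0. replace (b*0) with 0 by ring. rewrite cos_0, sin_0. ring. }
    apply RL_plus; apply RL_mul; try apply (RL_cont _ Hc1); try apply (RL_cont _ Hc2); assumption. }
  assert (L2 : RL F2 y0).
  { replace y0 with ((exp (- a * 0) * cos (b * 0)) * y0 - (exp (- a * 0) * sin (b * 0)) * x0).
    2:{ rewrite E0. replace (b*0) with 0 by ring. rewrite cos_0, sin_0. ring. }
    unfold Rminus. apply RL_plus. apply RL_mul; try apply (RL_cont _ Hc1); assumption.
    replace (- (exp (- a * 0) * sin (b * 0) * x0)) with ((-1) * (exp (- a * 0) * sin (b * 0) * x0)) by ring.
    eapply RL_ext with (f := fun s => (-1) * (exp (- a * s) * sin (b * s) * x s)). intros; ring.
    apply RL_mul. apply RL_const. apply RL_mul; try apply (RL_cont _ Hc2); assumption. }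
  assert (K1 : F1 1 = x0).
  { apply (RL_unique F1); [|exact L1]. eapply RL_ext; [|apply (RL_const (F1 1))]. intros s Hs. symmetry; auto. }
  assert (K2 : F2 1 = y0).
  { apply (RL_unique F2); [|exact L2]. eapply RL_ext; [|apply (RL_const (F2 1))]. intros s Hs. symmetry; auto. }
  intros t Ht. specialize (C1 t Ht). specialize (C2 t Ht). rewrite K1 in C1. rewrite K2 in C2.
  unfold F1, F2 in *. rewrite <- C1, <- C2.
  assert (Hg : g t = (x t, y t)) by (unfold x, y; destruct (g t); reflexivity).
  rewrite Hg. unfold cexp, RtoC, Cmult; simpl.
  replace (t * a - 0 * b) with (a * t) by ring. replace (t * b + 0 * a) with (b * t) by ring.
  replace (- a * t) with (- (a * t)) by ring. rewrite exp_Ropp.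
  assert (Hcs := sin2_cos2 (b * t)). unfold Rsqr in Hcs.
  assert (He : exp (a * t) <> 0) by (apply Rgt_not_eq, exp_pos).
  f_equal; field_simplify; try exact He;
  [ transitivity (x t * (sin (b*t) * sin (b*t) + cos (b*t) * cos (b*t))) |
    transitivity (y t * (sin (b*t) * sin (b*t) + cos (b*t) * cos (b*t))) ];
  try (rewrite Hcs; ring); ring.
Qed.

Close Scope C_scope.
Open Scope R_scope.

Lemma CD_plus f g t a b : CD f t a -> CD g t b -> CD (fun s => f s + g s)%C t (a + b)%C.
Proof.
  intros [H1 H2] [H3 H4]. split; simpl.
  - apply (RD_plus (fun s => fst (f s)) (fun s => fst (g s))); assumption.
  - apply (RD_plus (fun s => snd (f s)) (fun s => snd (g s))); assumption.
Qed.
Lemma CD_cmul f t a (c : C) : CD f t a -> CD (fun s => c * f s)%C t (c * a)%C.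
Proof.
  intros [H1 H2]. destruct c as [c1 c2]. split; simpl.
  - apply (RD_minus (fun s => c1 * fst (f s)) (fun s => c2 * snd (f s))); apply RD_scal; assumption.
  - apply (RD_plus (fun s => c1 * snd (f s)) (fun s => c2 * fst (f s))); apply RD_scal; assumption.
Qed.
Lemma CD_ext f g t a : (forall s, f s = g s) -> CD f t a -> CD g t a.
Proof.
  intros He [H1 H2]. split.
  - eapply is_derive_ext; [|exact H1]. intros s; simpl; rewrite He; reflexivity.
  - eapply is_derive_ext; [|exact H2]. intros s; simpl; rewrite He; reflexivity.
Qed.
Lemma CD_eq f t a b : CD f t a -> a = b -> CD f t b.
Proof. intros H ->; exact H. Qed.

Lemma CL_plus f g a b : CL f a -> CL g b -> CL (fun s => f s + g s)%C (a + b)%C.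
Proof.
  intros [H1 H2] [H3 H4]. split; simpl.
  - apply (RL_plus (fun s => fst (f s)) (fun s => fst (g s))); assumption.
  - apply (RL_plus (fun s => snd (f s)) (fun s => snd (g s))); assumption.
Qed.
Lemma CL_cmul f a (c : C) : CL f a -> CL (fun s => c * f s)%C (c * a)%C.
Proof.
  intros [H1 H2]. destruct c as [c1 c2]. split; simpl.
  - unfold Rminus. apply (RL_plus (fun s => c1 * fst (f s)) (fun s => - (c2 * snd (f s)))).
    + apply RL_mul; [apply RL_const|assumption].
    + eapply RL_ext with (f := fun s => (-c2) * snd (f s)). intros; ring.
      replace (- (c2 * snd a)) with (-c2 * snd a) by ring. apply RL_mul; [apply RL_const|assumption].
  - apply (RL_plus (fun s => c1 * snd (f s)) (fun s => c2 * fst (f s))); apply RL_mul; try apply RL_const; assumption.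
Qed.
Lemma CL_ext f g a : (forall s, f s = g s) -> CL f a -> CL g a.
Proof.
  intros He [H1 H2]. split.
  - eapply RL_ext; [|exact H1]. intros s _; simpl; rewrite He; reflexivity.
  - eapply RL_ext; [|exact H2]. intros s _; simpl; rewrite He; reflexivity.
Qed.

Definition VD (f : R -> V3) t (d : V3) :=
  CD (fun s => c1 (f s)) t (c1 d) /\ CD (fun s => c2 (f s)) t (c2 d) /\ CD (fun s => c3 (f s)) t (c3 d).
Definition VL (f : R -> V3) (l : V3) :=
  CL (fun s => c1 (f s)) (c1 l) /\ CL (fun s => c2 (f s)) (c2 l) /\ CL (fun s => c3 (f s)) (c3 l).

Definition matapp (a11 a12 a13 a21 a22 a23 a31 a32 a33 : C) (v : V3) : V3 :=
  mkV3 (a11 * c1 v + a12 * c2 v + a13 * c3 v)%C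
       (a21 * c1 v + a22 * c2 v + a23 * c3 v)%C
       (a31 * c1 v + a32 * c2 v + a33 * c3 v)%C.

Lemma CD3 f1 f2 f3 t d1 d2 d3 a b c : CD f1 t d1 -> CD f2 t d2 -> CD f3 t d3 ->
  CD (fun s => a * f1 s + b * f2 s + c * f3 s)%C t (a * d1 + b * d2 + c * d3)%C.
Proof. intros. repeat apply CD_plus; apply CD_cmul; assumption. Qed.
Lemma CL3 f1 f2 f3 d1 d2 d3 a b c : CL f1 d1 -> CL f2 d2 -> CL f3 d3 ->
  CL (fun s => a * f1 s + b * f2 s + c * f3 s)%C (a * d1 + b * d2 + c * d3)%C.
Proof. intros. repeat apply CL_plus; apply CL_cmul; assumption. Qed.

Lemma VD_mat a11 a12 a13 a21 a22 a23 a31 a32 a33 f t d : VD f t d ->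
  VD (fun s => matapp a11 a12 a13 a21 a22 a23 a31 a32 a33 (f s)) t (matapp a11 a12 a13 a21 a22 a23 a31 a32 a33 d).
Proof. intros [H1 [H2 H3]]. split; [|split]; simpl; apply CD3; assumption. Qed.
Lemma VL_mat a11 a12 a13 a21 a22 a23 a31 a32 a33 f d : VL f d ->
  VL (fun s => matapp a11 a12 a13 a21 a22 a23 a31 a32 a33 (f s)) (matapp a11 a12 a13 a21 a22 a23 a31 a32 a33 d).
Proof. intros [H1 [H2 H3]]. split; [|split]; simpl; apply CL3; assumption. Qed.
Lemma VD_ext f g t d : (forall s, f s = g s) -> VD f t d -> VD g t d.
Proof. intros He [H1 [H2 H3]]. split; [|split]; eapply CD_ext; try eassumption; intros; simpl; rewrite He; reflexivity. Qed.
Lemma VL_ext f g d : (forall s, f s = g s) -> VL f d -> VL g d.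
Proof. intros He [H1 [H2 H3]]. split; [|split]; eapply CL_ext; try eassumption; intros; simpl; rewrite He; reflexivity. Qed.
Lemma VD_eq f t a b : VD f t a -> a = b -> VD f t b.
Proof. intros H ->; exact H. Qed.
Lemma VD_add f g t a b : VD f t a -> VD g t b -> VD (fun s => vadd (f s) (g s)) t (vadd a b).
Proof. intros [H1 [H2 H3]] [H4 [H5 H6]]. split; [|split]; simpl; apply CD_plus; assumption. Qed.
Lemma VL_add f g a b : VL f a -> VL g b -> VL (fun s => vadd (f s) (g s)) (vadd a b).
Proof. intros [H1 [H2 H3]] [H4 [H5 H6]]. split; [|split]; simpl; apply CL_plus; assumption. Qed.
Lemma VD_scal c f t a : VD f t a -> VD (fun s => vscal c (f s)) t (vscal c a).
Proof. intros [H1 [H2 H3]]. split; [|split]; simpl; apply CD_cmul; assumption. Qed.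
Lemma VL_scal c f a : VL f a -> VL (fun s => vscal c (f s)) (vscal c a).
Proof. intros [H1 [H2 H3]]. split; [|split]; simpl; apply CL_cmul; assumption. Qed.

Lemma RtoC_m1 : RtoC (-1) = (-1)%C.
Proof. reflexivity. Qed.

Lemma perp_mat k : exists a11 a12 a13 a21 a22 a23 a31 a32 a33, forall v,
  perp k v = matapp a11 a12 a13 a21 a22 a23 a31 a32 a33 v.
Proof.
  unfold perp. set (kt := cv (rscal (/ rnorm k) k)).
  exists (1 - c1 kt * c1 kt)%C, (- c1 kt * c2 kt)%C, (- c1 kt * c3 kt)%C,
         (- c2 kt * c1 kt)%C, (1 - c2 kt * c2 kt)%C, (- c2 kt * c3 kt)%C,
         (- c3 kt * c1 kt)%C, (- c3 kt * c2 kt)%C, (1 - c3 kt * c3 kt)%C.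
  intros v. unfold vsub, vadd, vopp, vscal, vdot, matapp, mkV3; cbn [c1 c2 c3 fst snd]. f_equal; [f_equal|]; match goal with |- ?a = ?b => change (@eq C a b) end; ring.
Qed.
Lemma icross_mat xi : exists a11 a12 a13 a21 a22 a23 a31 a32 a33, forall v,
  icross xi v = matapp a11 a12 a13 a21 a22 a23 a31 a32 a33 v.
Proof.
  unfold icross, vcross, vscal. set (x := cv xi).
  exists 0%C, (- Ci * c3 x)%C, (Ci * c2 x)%C,
         (Ci * c3 x)%C, 0%C, (- Ci * c1 x)%C,
         (- Ci * c2 x)%C, (Ci * c1 x)%C, 0%C.
  intros v. unfold matapp, mkV3; cbn [c1 c2 c3 fst snd]. f_equal; [f_equal|]; match goal with |- ?a = ?b => change (@eq C a b) end; ring.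
Qed.
Lemma VD_perp k f t a : VD f t a -> VD (fun s => perp k (f s)) t (perp k a).
Proof.
  destruct (perp_mat k) as (a11&a12&a13&a21&a22&a23&a31&a32&a33&H). intros Hf.
  rewrite H. eapply VD_ext; [intros s; symmetry; apply H|]. apply VD_mat; exact Hf.
Qed.
Lemma VL_perp k f a : VL f a -> VL (fun s => perp k (f s)) (perp k a).
Proof.
  destruct (perp_mat k) as (a11&a12&a13&a21&a22&a23&a31&a32&a33&H). intros Hf.
  rewrite H. eapply VL_ext; [intros s; symmetry; apply H|]. apply VL_mat; exact Hf.
Qed.
Lemma VD_icross k f t a : VD f t a -> VD (fun s => icross k (f s)) t (icross k a).
Proof.
  destruct (icross_mat k) as (a11&a12&a13&a21&a22&a23&a31&a32&a33&H). intros Hf.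
  rewrite H. eapply VD_ext; [intros s; symmetry; apply H|]. apply VD_mat; exact Hf.
Qed.
Lemma VL_icross k f a : VL f a -> VL (fun s => icross k (f s)) (icross k a).
Proof.
  destruct (icross_mat k) as (a11&a12&a13&a21&a22&a23&a31&a32&a33&H). intros Hf.
  rewrite H. eapply VL_ext; [intros s; symmetry; apply H|]. apply VL_mat; exact Hf.
Qed.

Lemma VD_of (f : R -> V3) t d : is_derive f t d -> VD f t d.
Proof.
  intros H.
  pose proof (is_derive_fst' _ _ _ H) as Hf. pose proof (is_derive_snd' _ _ _ H) as Hs.
  pose proof (is_derive_fst' _ _ _ Hf) as Hff. pose proof (is_derive_snd' _ _ _ Hf) as Hfs.
  unfold VD, CD, c1, c2, c3. simpl in *.
  refine (conj (conj _ _) (conj (conj _ _) (conj _ _))).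
  - exact (is_derive_fst' _ _ _ Hff).
  - exact (is_derive_snd' _ _ _ Hff).
  - exact (is_derive_fst' _ _ _ Hfs).
  - exact (is_derive_snd' _ _ _ Hfs).
  - exact (is_derive_fst' _ _ _ Hs).
  - exact (is_derive_snd' _ _ _ Hs).
Qed.
Lemma VL_of (f : R -> V3) l : filterlim f (at_right 0) (locally l) -> VL f l.
Proof.
  intros H.
  pose proof (fl_fst' _ _ H) as Hf. pose proof (fl_snd' _ _ H) as Hs.
  pose proof (fl_fst' _ _ Hf) as Hff. pose proof (fl_snd' _ _ Hf) as Hfs.
  unfold VL, CL, RL, c1, c2, c3. simpl in *.
  refine (conj (conj _ _) (conj (conj _ _) (conj _ _))).
  - exact (fl_fst' _ _ Hff).
  - exact (fl_snd' _ _ Hff).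
  - exact (fl_fst' _ _ Hfs).
  - exact (fl_snd' _ _ Hfs).
  - exact (fl_fst' _ _ Hs).
  - exact (fl_snd' _ _ Hs).
Qed.

Lemma ode3 (f : R -> V3) (f0 : V3) (w : C) :
  (forall t, 0 < t -> VD f t (vscal w (f t))) -> VL f f0 ->
  forall t, 0 < t -> f t = vscal (cexp (RtoC t * w)) f0.
Proof.
  intros HD [L1 [L2 L3]] t Ht.
  assert (E1 := ode1 (fun s => c1 (f s)) (c1 f0) w (fun t Ht => proj1 (HD t Ht)) L1 t Ht).
  assert (E2 := ode1 (fun s => c2 (f s)) (c2 f0) w (fun t Ht => proj1 (proj2 (HD t Ht))) L2 t Ht).
  assert (E3 := ode1 (fun s => c3 (f s)) (c3 f0) w (fun t Ht => proj2 (proj2 (HD t Ht))) L3 t Ht).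
  simpl in *. unfold vscal, mkV3. rewrite <- E1, <- E2, <- E3.
  unfold c1, c2, c3. destruct (f t) as [[a b] c]. reflexivity.
Qed.

Close Scope C_scope.
Open Scope R_scope.

Ltac cring := match goal with |- ?a = ?b => change (@eq C a b); ring end.

Lemma V3_eq (v w : V3) : c1 v = c1 w -> c2 v = c2 w -> c3 v = c3 w -> v = w.
Proof. destruct v as [[a b] c], w as [[a' b'] c']. unfold c1, c2, c3; simpl. intros -> -> ->. reflexivity. Qed.

Ltac vsimp := cbn [c1 c2 c3 fst snd mkV3 vadd vscal vopp vsub vdot vcross icross ik cv rscal r1 r2 r3].
Ltac vring := apply V3_eq; unfold vadd, vscal, vopp, vsub, vdot, vcross, icross, ik, cv, rscal, mkV3; vsimp;
  rewrite ?RtoC_mult; cring.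

Definition P (a : R3) (v : V3) : V3 := vsub v (vscal (vdot (cv a) v) (cv a)).
Definition Nrm (a : R3) : R := r1 a * r1 a + r2 a * r2 a + r3 a * r3 a.

Lemma perp_P k v : perp k v = P (rscal (/ rnorm k) k) v.
Proof. reflexivity. Qed.

Lemma P_add a v w : P a (vadd v w) = vadd (P a v) (P a w).
Proof. unfold P. vring. Qed.
Lemma P_scal a c v : P a (vscal c v) = vscal c (P a v).
Proof. unfold P. vring. Qed.
Lemma P_opp a v : P a (vopp v) = vopp (P a v).
Proof. unfold P. vring. Qed.

Lemma diffz (x y z N : C) : N = 1%C -> (x - y = z * (N - 1))%C -> x = y.
Proof. intros -> H. assert (x - y = 0)%C by (rewrite H; ring).
  transitivity ((x - y) + y)%C; [ring|]. rewrite H0. ring. Qed.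

Lemma NrmC a : Nrm a = 1 -> (RtoC (r1 a) * RtoC (r1 a) + RtoC (r2 a) * RtoC (r2 a) + RtoC (r3 a) * RtoC (r3 a))%C = 1%C.
Proof. intros H. rewrite <- !RtoC_mult, <- !RtoC_plus. unfold Nrm in H. rewrite H. reflexivity. Qed.

Lemma P_ik a r : Nrm a = 1 -> P a (ik (rscal r a)) = mkV3 0 0 0.
Proof.
  intros H. apply NrmC in H. destruct a as [[a1 a2] a3]. unfold r1, r2, r3 in H; simpl in H.
  unfold P. apply V3_eq; unfold vadd, vscal, vopp, vsub, vdot, vcross, icross, ik, cv, rscal, mkV3; vsimp;
  rewrite ?RtoC_mult;
  [ apply (diffz _ _ (- (Ci * RtoC r * RtoC a1))%C _ H)
  | apply (diffz _ _ (- (Ci * RtoC r * RtoC a2))%C _ H)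
  | apply (diffz _ _ (- (Ci * RtoC r * RtoC a3))%C _ H)]; cring.
Qed.

Lemma P_cross a r B : P a (vcross (ik (rscal r a)) B) = vcross (ik (rscal r a)) B.
Proof. unfold P. vring. Qed.
Lemma cross_P a r B : vcross (ik (rscal r a)) (P a B) = vcross (ik (rscal r a)) B.
Proof. unfold P. vring. Qed.
Lemma icross_ik q k w : icross (rscal q k) w = vscal (RtoC q) (vcross (ik k) w).
Proof. vring. Qed.
Lemma icross_add k v w : icross k (vadd v w) = vadd (icross k v) (icross k w).
Proof. vring. Qed.
Lemma icross_scal k c v : icross k (vscal c v) = vscal c (icross k v).
Proof. vring. Qed.

Lemma Ci2 : (Ci * Ci = -1)%C.
Proof. unfold Ci, Cmult, RtoC. simpl. f_equal; ring. Qed.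

Lemma diffC (x y z : C) : (x - y = z * (Ci * Ci + 1))%C -> x = y.
Proof. rewrite Ci2. intros H. assert (x - y = 0)%C by (rewrite H; ring).
  transitivity ((x - y) + y)%C; [ring|]. rewrite H0. ring. Qed.

Lemma icross2 k v : icross k (icross k v) = vscal (-1) (vcross (cv k) (vcross (cv k) v)).
Proof.
  apply V3_eq;
  [ apply (diffC _ _ (c1 (vcross (cv k) (vcross (cv k) v))))
  | apply (diffC _ _ (c2 (vcross (cv k) (vcross (cv k) v))))
  | apply (diffC _ _ (c3 (vcross (cv k) (vcross (cv k) v))))];
  unfold vadd, vscal, vopp, vsub, vdot, vcross, icross, ik, cv, rscal, mkV3; vsimp; cring.
Qed.

Lemma XX a q r w : Nrm a = 1 ->
  icross (rscal q (rscal r a)) (icross (rscal q (rscal r a)) (P a w)) = vscal (RtoC (q*r*(q*r))) (P a w).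
Proof.
  intros H. rewrite icross2. apply NrmC in H. destruct a as [[a1 a2] a3]. unfold r1, r2, r3 in H; simpl in H.
  unfold P. apply V3_eq; unfold vadd, vscal, vopp, vsub, vdot, vcross, icross, ik, cv, rscal, mkV3; vsimp;
  rewrite ?RtoC_mult;
  [ apply (diffz _ _ (RtoC q * RtoC r * RtoC q * RtoC r * c1 w)%C _ H)
  | apply (diffz _ _ (RtoC q * RtoC r * RtoC q * RtoC r * c2 w)%C _ H)
  | apply (diffz _ _ (RtoC q * RtoC r * RtoC q * RtoC r * c3 w)%C _ H)]; cring.
Qed.

Close Scope C_scope.
Open Scope R_scope.

Local Open Scope C_scope.

Definition q (p S l : C) : C := l^3 + p*l^2 + (S+1)*l + p*S.
Definition Vv (p l x y z : C) : C := l*x + l*(l+p)*y + (l+p)*z.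
Definition n11 (S l : C) := l^2 + S.
Definition n12 (l : C) := - l.
Definition n13 (l : C) := - (1).
Definition n21 (l : C) := l.
Definition n22 (p l : C) := l*(l+p).
Definition n23 (p l : C) := l + p.
Definition n31 (S l : C) := - S.
Definition n32 (p S l : C) := - S * (l + p).
Definition n33 (p l : C) := l^2 + p*l + 1.
Definition T (n : C -> C) (e1 e2 e3 l1 l2 l3 : C) :=
  e1 * n l1 / ((l1-l2)*(l1-l3)) + e2 * n l2 / ((l2-l3)*(l2-l1)) + e3 * n l3 / ((l3-l1)*(l3-l2)).

Lemma T_cyc n e1 e2 e3 l1 l2 l3 : T n e1 e2 e3 l1 l2 l3 = T n e2 e3 e1 l2 l3 l1.
Proof. unfold T. ring. Qed.

Lemma mul0 (a b : C) : a * b = 0 -> a <> 0 -> b = 0.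
Proof. intros H Ha. transitivity (/a * (a*b)). field. exact Ha. rewrite H. ring. Qed.
Lemma sub0 (a b : C) : a - b = 0 -> a = b.
Proof. intros H. transitivity ((a - b) + b); [ring|]. rewrite H; ring. Qed.
Lemma sub_neq (a b : C) : a <> b -> a - b <> 0.
Proof. intros H H'. apply H, sub0, H'. Qed.

Lemma OD p S l m : q p S l = 0 -> q p S m = 0 -> l <> m ->
  Vv p m (n11 S l) (n21 l) (n31 S l) = 0 /\ Vv p m (n12 l) (n22 p l) (n32 p S l) = 0 /\
  Vv p m (n13 l) (n23 p l) (n33 p l) = 0.
Proof.
  intros Hl Hm Hlm. apply sub_neq in Hlm.
  split; [|split]; apply (mul0 (l - m)); auto.
  - transitivity (q p S l * m - q p S m * l); [unfold q, Vv, n11, n21, n31; ring|]. rewrite Hl, Hm; ring.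
  - transitivity (q p S l * (m*(m+p)) - q p S m * (l*(l+p))); [unfold q, Vv, n12, n22, n32; ring|]. rewrite Hl, Hm; ring.
  - transitivity (q p S l * (m+p) - q p S m * (l+p)); [unfold q, Vv, n13, n23, n33; ring|]. rewrite Hl, Hm; ring.
Qed.

Definition dq (p S l : C) := 3*l^2 + 2*p*l + S + 1.

Lemma DG p S l : q p S l = 0 ->
  Vv p l (n11 S l) (n21 l) (n31 S l) = dq p S l * l /\ Vv p l (n12 l) (n22 p l) (n32 p S l) = dq p S l * (l*(l+p)) /\
  Vv p l (n13 l) (n23 p l) (n33 p l) = dq p S l * (l+p).
Proof.
  intros Hl. split; [|split].
  - transitivity (dq p S l * l - q p S l * 1); [unfold q, dq, Vv, n11, n21, n31; ring|]. rewrite Hl; ring.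
  - transitivity (dq p S l * (l*(l+p)) - q p S l * (2*l+p)); [unfold q, dq, Vv, n12, n22, n32; ring|]. rewrite Hl; ring.
  - transitivity (dq p S l * (l+p) - q p S l * 1); [unfold q, dq, Vv, n13, n23, n33; ring|]. rewrite Hl; ring.
Qed.

Lemma dq_Pi p S l1 l2 l3 : l1 + l2 + l3 = - p -> l1*l2 + l1*l3 + l2*l3 = S + 1 ->
  dq p S l1 = (l1 - l2) * (l1 - l3).
Proof.
  intros H1 H2. assert (Hp : p = - (l1+l2+l3)) by (rewrite H1; ring).
  assert (HS : S = l1*l2 + l1*l3 + l2*l3 - 1) by (rewrite H2; ring).
  subst p S. unfold dq. ring.
Qed.

Definition row1 (p S x0 y0 z0 l : C) := n11 S l * x0 + n12 l * y0 + n13 l * z0.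
Definition row2 (p S x0 y0 z0 l : C) := n21 l * x0 + n22 p l * y0 + n23 p l * z0.
Definition row3 (p S x0 y0 z0 l : C) := n31 S l * x0 + n32 p S l * y0 + n33 p l * z0.

Section VM.
Variables (p S l1 l2 l3 e1 e2 e3 x0 y0 z0 : C).
Hypotheses (Hq1 : q p S l1 = 0) (Hq2 : q p S l2 = 0) (Hq3 : q p S l3 = 0)
  (H1 : l1 + l2 + l3 = - p) (H2 : l1*l2 + l1*l3 + l2*l3 = S + 1)
  (D12 : l1 <> l2) (D23 : l2 <> l3) (D13 : l1 <> l3).


Lemma VM1 : Vv p l1 (T (row1 p S x0 y0 z0) e1 e2 e3 l1 l2 l3) (T (row2 p S x0 y0 z0) e1 e2 e3 l1 l2 l3)
  (T (row3 p S x0 y0 z0) e1 e2 e3 l1 l2 l3)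
  = e1 * Vv p l1 x0 y0 z0.
Proof.
  destruct (OD p S l2 l1 Hq2 Hq1 (not_eq_sym D12)) as (A1 & A2 & A3).
  destruct (OD p S l3 l1 Hq3 Hq1 (not_eq_sym D13)) as (B1 & B2 & B3).
  destruct (DG p S l1 Hq1) as (C1' & C2' & C3').
  rewrite (dq_Pi p S l1 l2 l3 H1 H2) in C1', C2', C3'.
  set (P1 := (l1 - l2) * (l1 - l3)) in *.
  set (P2 := (l2 - l3) * (l2 - l1)). set (P3 := (l3 - l1) * (l3 - l2)).
  transitivity (e1 / P1 * (x0 * Vv p l1 (n11 S l1) (n21 l1) (n31 S l1) + y0 * Vv p l1 (n12 l1) (n22 p l1) (n32 p S l1)
                            + z0 * Vv p l1 (n13 l1) (n23 p l1) (n33 p l1))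
              + e2 / P2 * (x0 * Vv p l1 (n11 S l2) (n21 l2) (n31 S l2) + y0 * Vv p l1 (n12 l2) (n22 p l2) (n32 p S l2)
                            + z0 * Vv p l1 (n13 l2) (n23 p l2) (n33 p l2))
              + e3 / P3 * (x0 * Vv p l1 (n11 S l3) (n21 l3) (n31 S l3) + y0 * Vv p l1 (n12 l3) (n22 p l3) (n32 p S l3)
                            + z0 * Vv p l1 (n13 l3) (n23 p l3) (n33 p l3))).
  { unfold T, row1, row2, row3, Vv, P1, P2, P3. unfold Cdiv. ring. }
  rewrite A1, A2, A3, B1, B2, B3, C1', C2', C3'.
  assert (HP1 : P1 <> 0).
  { unfold P1. apply Cmult_neq_0; apply sub_neq; auto. }
  assert (HP2 : P2 <> 0) by (unfold P2; apply Cmult_neq_0; apply sub_neq; auto).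
  assert (HP3 : P3 <> 0) by (unfold P3; apply Cmult_neq_0; apply sub_neq; auto).
  unfold Vv. field. auto.
Qed.
End VM.

Lemma UQ (p l1 l2 l3 a b c : C) : p <> 0 -> l1 <> l2 -> l2 <> l3 -> l1 <> l3 ->
  Vv p l1 a b c = 0 -> Vv p l2 a b c = 0 -> Vv p l3 a b c = 0 -> a = 0 /\ b = 0 /\ c = 0.
Proof.
  intros Hp D12 D23 D13 F1 F2 F3.
  assert (K12 : b*(l1+l2) + (a + p*b + c) = 0).
  { apply (mul0 (l1 - l2)); [|apply sub_neq; auto].
    transitivity (Vv p l1 a b c - Vv p l2 a b c); [unfold Vv; ring|]. rewrite F1, F2; ring. }
  assert (K13 : b*(l1+l3) + (a + p*b + c) = 0).
  { apply (mul0 (l1 - l3)); [|apply sub_neq; auto].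
    transitivity (Vv p l1 a b c - Vv p l3 a b c); [unfold Vv; ring|]. rewrite F1, F3; ring. }
  assert (Hb : b = 0).
  { apply (mul0 (l2 - l3)); [|apply sub_neq; auto].
    transitivity ((b*(l1+l2) + (a + p*b + c)) - (b*(l1+l3) + (a + p*b + c))); [ring|]. rewrite K12, K13; ring. }
  subst b.
  assert (Hc : c = 0).
  { apply (mul0 p); [|auto].
    transitivity (Vv p l1 a 0 c - l1 * (0*(l1+l2) + (a + p*0 + c))); [unfold Vv; ring|]. rewrite F1, K12; ring. }
  subst c. split; [|split]; auto.
  transitivity (0*(l1+l2) + (a + p*0 + 0)); [ring|]. exact K12.
Qed.

Lemma div3 (a b c d : C) : (a + b + c) / d = a / d + b / d + c / d.
Proof. unfold Cdiv. ring. Qed.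

Section TW.
Variables (x y z p S e Dv : C).
Hypotheses (Hyz : y + z = - p - x) (Hq : q p S x = 0) (Hxp : x + p <> 0) (Hx0 : x <> 0)
  (Dxy : x <> y) (Dyz : y <> z) (Dzx : z <> x) (HD : Dv = (x-y)*(y-z)*(z-x)).

Lemma S_expr : S = - (x^3 + p*x^2 + x) / (x + p).
Proof.
  assert (HS : S*(x+p) = -(x^3+p*x^2+x)).
  { transitivity (q p S x - (x^3+p*x^2+x)); [unfold q; ring|]. rewrite Hq; ring. }
  rewrite <- HS. field. exact Hxp.
Qed.

Ltac tw := subst Dv; try rewrite S_expr;
  assert (A1 := sub_neq _ _ Dxy); assert (A2 := sub_neq _ _ Dyz); assert (A3 := sub_neq _ _ Dzx);
  assert (A4 : x - z <> 0) by (apply sub_neq; auto);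
  assert (A5 : - p - x <> 0) by (intros H; apply Hxp; transitivity (-(-p - x)); [ring|]; rewrite H; ring);
  field; repeat split; auto.

Lemma TW11 : e * (- x) * ((y - z) / (y + z)) / Dv = e * n11 S x / ((x-y)*(x-z)).
Proof. rewrite Hyz. unfold n11. tw. Qed.
Lemma TW22 : e * x * (y^2 - z^2) / Dv = e * n22 p x / ((x-y)*(x-z)).
Proof. replace (y^2 - z^2) with ((y-z)*(y+z)) by ring. rewrite Hyz. unfold n22. tw. Qed.
Lemma TW33 : e * (- S) * ((y^2 - z^2) / x) / Dv = e * n33 p x / ((x-y)*(x-z)).
Proof. replace (y^2 - z^2) with ((y-z)*(y+z)) by ring. rewrite Hyz. unfold n33. tw. Qed.
End TW.

Section TW2.
Variables (x y z p e Dv : C).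
Hypotheses (Dxy : x <> y) (Dyz : y <> z) (Dzx : z <> x) (HD : Dv = (x-y)*(y-z)*(z-x)).
Ltac tw2 := subst Dv;
  assert (A1 := sub_neq _ _ Dxy); assert (A2 := sub_neq _ _ Dyz); assert (A3 := sub_neq _ _ Dzx);
  assert (A4 : x - z <> 0) by (apply sub_neq; auto);
  field; repeat split; auto.
Lemma TW12 : e * x * (y - z) / Dv = e * n12 x / ((x-y)*(x-z)).
Proof. unfold n12. tw2. Qed.
Lemma TW13 : e * (y - z) / Dv = e * n13 x / ((x-y)*(x-z)).
Proof. unfold n13. tw2. Qed.
Lemma TW23 (Hyz : y + z = - p - x) : e * (y^2 - z^2) / Dv = e * n23 p x / ((x-y)*(x-z)).
Proof. replace (y^2 - z^2) with ((y-z)*(y+z)) by ring. rewrite Hyz. unfold n23. tw2. Qed.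
End TW2.

Section MS.
Variables (l1 l2 l3 p : C) (s tau : R).
Hypotheses (Hsum : l1 + l2 + l3 = - p)
  (Hq1 : q p (RtoC s) l1 = 0) (Hq2 : q p (RtoC s) l2 = 0) (Hq3 : q p (RtoC s) l3 = 0)
  (D12 : l1 <> l2) (D23 : l2 <> l3) (D13 : l1 <> l3)
  (P1 : l1 + p <> 0) (P2 : l2 + p <> 0) (P3 : l3 + p <> 0)
  (Z1 : l1 <> 0) (Z2 : l2 <> 0) (Z3 : l3 <> 0).

Ltac side := first [ assumption | (apply not_eq_sym; assumption) | (unfold Dl; ring) | (rewrite <- Hsum; ring) ].

Ltac msum tw := rewrite div3; f_equal; [f_equal|]; eapply tw; side.

Lemma M11 : m11 l1 l2 l3 tau = T (n11 (RtoC s)) (ex tau l1) (ex tau l2) (ex tau l3) l1 l2 l3.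
Proof. unfold m11, T. msum TW11. Qed.
Lemma M22 : m22 l1 l2 l3 tau = T (n22 p) (ex tau l1) (ex tau l2) (ex tau l3) l1 l2 l3.
Proof. unfold m22, T. msum TW22. Qed.
Lemma M33 : m33 l1 l2 l3 tau s = T (n33 p) (ex tau l1) (ex tau l2) (ex tau l3) l1 l2 l3.
Proof. unfold m33, T. msum TW33. Qed.
Lemma M12 : m12 l1 l2 l3 tau = T n12 (ex tau l1) (ex tau l2) (ex tau l3) l1 l2 l3.
Proof. unfold m12, T. msum TW12. Qed.
Lemma M13 : m13 l1 l2 l3 tau = T n13 (ex tau l1) (ex tau l2) (ex tau l3) l1 l2 l3.
Proof. unfold m13, T. msum TW13. Qed.
Lemma M23 : m23 l1 l2 l3 tau = T (n23 p) (ex tau l1) (ex tau l2) (ex tau l3) l1 l2 l3.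
Proof. unfold m23, T. msum TW23. Qed.
End MS.

Lemma alg_main (l1 l2 l3 p : C) (s tau : R) (x y z x0 y0 z0 : C) :
  l1 + l2 + l3 = - p -> l1*l2 + l1*l3 + l2*l3 = RtoC s + 1 ->
  q p (RtoC s) l1 = 0 -> q p (RtoC s) l2 = 0 -> q p (RtoC s) l3 = 0 ->
  l1 <> l2 -> l2 <> l3 -> l1 <> l3 -> p <> 0 ->
  l1 + p <> 0 -> l2 + p <> 0 -> l3 + p <> 0 -> l1 <> 0 -> l2 <> 0 -> l3 <> 0 ->
  Vv p l1 x y z = ex tau l1 * Vv p l1 x0 y0 z0 ->
  Vv p l2 x y z = ex tau l2 * Vv p l2 x0 y0 z0 ->
  Vv p l3 x y z = ex tau l3 * Vv p l3 x0 y0 z0 ->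
  x = m11 l1 l2 l3 tau * x0 + m12 l1 l2 l3 tau * y0 + m13 l1 l2 l3 tau * z0 /\
  y = - m12 l1 l2 l3 tau * x0 + m22 l1 l2 l3 tau * y0 + m23 l1 l2 l3 tau * z0 /\
  z = RtoC s * m13 l1 l2 l3 tau * x0 - RtoC s * m23 l1 l2 l3 tau * y0 + m33 l1 l2 l3 tau s * z0.
Proof.
  intros Hs1 Hs2 Hq1 Hq2 Hq3 D12 D23 D13 Hp P1 P2 P3 Z1 Z2 Z3 F1 F2 F3.
  erewrite M11, M12, M13, M22, M23, M33 by eauto.
  set (S := RtoC s) in *.
  set (e1 := ex tau l1) in *. set (e2 := ex tau l2) in *. set (e3 := ex tau l3) in *.
  set (X := T (row1 p S x0 y0 z0) e1 e2 e3 l1 l2 l3).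
  set (Y := T (row2 p S x0 y0 z0) e1 e2 e3 l1 l2 l3).
  set (Z := T (row3 p S x0 y0 z0) e1 e2 e3 l1 l2 l3).
  assert (G1 : Vv p l1 X Y Z = e1 * Vv p l1 x0 y0 z0) by (apply VM1; auto).
  assert (G2 : Vv p l2 X Y Z = e2 * Vv p l2 x0 y0 z0).
  { unfold X, Y, Z. rewrite !(T_cyc _ e1 e2 e3 l1 l2 l3). apply VM1; auto.
    rewrite <- Hs1; ring. rewrite <- Hs2; ring. }
  assert (G3 : Vv p l3 X Y Z = e3 * Vv p l3 x0 y0 z0).
  { unfold X, Y, Z. rewrite !(T_cyc _ e1 e2 e3 l1 l2 l3), !(T_cyc _ e2 e3 e1 l2 l3 l1). apply VM1; auto.
    rewrite <- Hs1; ring. rewrite <- Hs2; ring. }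
  assert (U : x - X = 0 /\ y - Y = 0 /\ z - Z = 0).
  { clearbody X Y Z e1 e2 e3. apply (UQ p l1 l2 l3); auto.
    - transitivity (Vv p l1 x y z - Vv p l1 X Y Z); [unfold Vv; ring|]. rewrite F1, G1. ring.
    - transitivity (Vv p l2 x y z - Vv p l2 X Y Z); [unfold Vv; ring|]. rewrite F2, G2. ring.
    - transitivity (Vv p l3 x y z - Vv p l3 X Y Z); [unfold Vv; ring|]. rewrite F3, G3. ring. }
  destruct U as (U1 & U2 & U3). apply sub0 in U1, U2, U3.
  rewrite U1, U2, U3. unfold X, Y, Z, T, row1, row2, row3, n11, n12, n13, n21, n22, n23, n31, n32, n33.
  unfold Cdiv. split; [|split]; ring.
Qed.

Close Scope C_scope.
Open Scope R_scope.

Definition peval (c : list R) (x : R) : R := fold_right (fun a acc => a + x * acc) 0 c.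
Fixpoint pdiv (r : R) (c : list R) : list R :=
  match c with nil => nil | cons b rest => cons (peval c r) (pdiv r rest) end.

Lemma pdiv_len r c : length (pdiv r c) = length c.
Proof. induction c; simpl; auto. Qed.

Lemma pdiv_spec r x rest : forall a, peval (a :: rest) x = (x - r) * peval (pdiv r rest) x + peval (a :: rest) r.
Proof.
  induction rest as [|b rest IH]; intros a.
  - simpl. ring.
  - change (peval (a :: b :: rest) x) with (a + x * peval (b :: rest) x).
    rewrite (IH b). simpl. ring.
Qed.

Lemma roots_finite n : forall c, (length c <= n)%nat -> (exists y, peval c y <> 0) ->
  exists L, forall x, peval c x = 0 -> In x L.
Proof.
  induction n as [|n IH]; intros c Hl [y Hy].
  - destruct c; [simpl in Hy; lra | simpl in Hl; lia].
  - destruct c as [|a rest]; [simpl in Hy; lra|].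
    destruct (classic (exists r, peval (a :: rest) r = 0)) as [[r Hr]|Hn].
    + assert (Hyr : y <> r) by (intros ->; contradiction).
      assert (HQ : peval (pdiv r rest) y <> 0).
      { intros H0. apply Hy. rewrite (pdiv_spec r y rest a), H0, Hr. ring. }
      destruct (IH (pdiv r rest)) as [L HL].
      { rewrite pdiv_len. simpl in Hl. lia. }
      { exists y; exact HQ. }
      exists (r :: L). intros x Hx. rewrite (pdiv_spec r x rest a), Hr in Hx.
      assert (Hx' : (x - r) * peval (pdiv r rest) x = 0) by lra.
      apply Rmult_integral in Hx'. destruct Hx' as [H|H].
      * left. lra.
      * right. apply HL, H.
    + exists nil. intros x Hx. exfalso. apply Hn. exists x; exact Hx.
Qed.

Definition dcoef (a : R) : list R :=
  cons (-4) (cons (-12) (cons (a^2 - 12) (cons (20*a^2 - 4) (cons (-8*a^2) (cons (-4*a^4) nil))))).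

Lemma dcoef_roots a : exists L, forall x, peval (dcoef a) x = 0 -> In x L.
Proof.
  apply (roots_finite 6); [simpl; lia|]. exists 0. simpl. lra.
Qed.

Local Open Scope C_scope.
Lemma disc_gen (l1 l2 l3 b c d : C) : l1 + l2 + l3 = - b -> l1*l2 + l1*l3 + l2*l3 = c -> l1*l2*l3 = - d ->
  Dl l1 l2 l3 * Dl l1 l2 l3 = b*b*c*c - 4*c*c*c - 4*b*b*b*d - 27*d*d + 18*b*c*d.
Proof.
  intros H1 H2 H3.
  assert (Hb : b = - (l1+l2+l3)) by (rewrite H1; ring).
  assert (Hd : d = - (l1*l2*l3)) by (rewrite H3; ring).
  subst b c d. unfold Dl. ring.
Qed.

Lemma disc_R (a s : R) :
  let b := RtoC (a*s) in let c := RtoC (s+1) in let d := RtoC (a*s*s) in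
  b*b*c*c - 4*c*c*c - 4*b*b*b*d - 27*d*d + 18*b*c*d = RtoC (peval (dcoef a) s).
Proof.
  simpl. unfold RtoC, Cmult, Cplus, Cminus, Copp. simpl. f_equal; ring.
Qed.

Close Scope C_scope.
Open Scope R_scope.

Lemma two_neq0 : (2 : C) <> 0%C.
Proof. intros H. apply (f_equal fst) in H. simpl in H. lra. Qed.

Lemma vieta (p S l1 l2 l3 : C) :
  (forall z : C, (z^3 + p*z^2 + (S+1)*z + p*S = (z-l1)*(z-l2)*(z-l3))%C) ->
  (l1 + l2 + l3 = - p)%C /\ (l1*l2 + l1*l3 + l2*l3 = S + 1)%C /\
  q p S l1 = 0%C /\ q p S l2 = 0%C /\ q p S l3 = 0%C.
Proof.
  intros H.
  assert (E0 := H 0%C). assert (E1 := H 1%C). assert (Em := H (-1)%C).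
  split; [|split; [|split; [|split]]].
  - apply sub0. apply (mul0 2%C); [|exact two_neq0].
    transitivity (((1^3 + p*1^2 + (S+1)*1 + p*S) - (1-l1)*(1-l2)*(1-l3))
                  + (((-1)^3 + p*(-1)^2 + (S+1)*(-1) + p*S) - (-1-l1)*(-1-l2)*(-1-l3))
                  - 2*((0^3 + p*0^2 + (S+1)*0 + p*S) - (0-l1)*(0-l2)*(0-l3)))%C.
    + ring.
    + rewrite E0, E1, Em. ring.
  - apply sub0. apply (mul0 2%C); [|exact two_neq0].
    transitivity (- (((1^3 + p*1^2 + (S+1)*1 + p*S) - (1-l1)*(1-l2)*(1-l3))
                  - (((-1)^3 + p*(-1)^2 + (S+1)*(-1) + p*S) - (-1-l1)*(-1-l2)*(-1-l3))))%C.
    + ring.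
    + rewrite E1, Em. ring.
  - transitivity ((l1 - l1)*(l1-l2)*(l1-l3))%C; [apply H|ring].
  - transitivity ((l2 - l1)*(l2-l2)*(l2-l3))%C; [apply H|ring].
  - transitivity ((l3 - l1)*(l3-l2)*(l3-l3))%C; [apply H|ring].
Qed.

Lemma geom_facts (k : R3) (beta : R) : k <> (0,0,0) -> 0 < beta ->
  0 < rnorm k /\ Nrm (rscal (/ rnorm k) k) = 1 /\ k = rscal (rnorm k) (rscal (/ rnorm k) k) /\
  rnorm (rscal (/ beta) k) ^ 2 = / beta * rnorm k * (/ beta * rnorm k) /\
  beta * sqrt (rnorm (rscal (/ beta) k) ^ 2) = rnorm k.
Proof.
  intros Hk Hb. destruct k as [[k1 k2] k3].
  unfold rnorm, Nrm, rscal, r1, r2, r3; cbn [fst snd].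
  set (K2 := k1 ^ 2 + k2 ^ 2 + k3 ^ 2).
  assert (HK : 0 < K2).
  { unfold K2. clear - Hk. destruct (Req_dec k1 0) as [->|h1].
    - destruct (Req_dec k2 0) as [->|h2].
      + destruct (Req_dec k3 0) as [->|h3].
        * exfalso; apply Hk; reflexivity.
        * assert (H := Rsqr_pos_lt _ h3). unfold Rsqr in H. nra.
      + assert (H := Rsqr_pos_lt _ h2). unfold Rsqr in H. nra.
    - assert (H := Rsqr_pos_lt _ h1). unfold Rsqr in H. nra. }
  assert (HK2 : k1 ^ 2 + k2 ^ 2 + k3 ^ 2 = K2) by reflexivity. clearbody K2.
  assert (Hr : 0 < sqrt K2) by (apply sqrt_lt_R0; exact HK).
  assert (Hrr : sqrt K2 * sqrt K2 = K2) by (apply sqrt_sqrt; lra).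
  assert (Hs : (/ beta * k1) ^ 2 + (/ beta * k2) ^ 2 + (/ beta * k3) ^ 2 = / beta * sqrt K2 * (/ beta * sqrt K2)).
  { transitivity (/beta * /beta * (k1 ^ 2 + k2 ^ 2 + k3 ^ 2)). field; lra. rewrite HK2. replace (/ beta * sqrt K2 * (/ beta * sqrt K2)) with (/ beta * / beta * (sqrt K2 * sqrt K2)) by ring. rewrite Hrr. reflexivity. }
  split; [exact Hr|]. split; [|split; [|split]].
  - transitivity ((k1 ^ 2 + k2 ^ 2 + k3 ^ 2) / (sqrt K2 * sqrt K2)). field; lra. rewrite HK2, Hrr. field; lra.
  - f_equal; [f_equal|]; field; lra.
  - rewrite pow2_sqrt; [exact Hs|]. nra.
  - rewrite pow2_sqrt; [|nra]. rewrite Hs. rewrite sqrt_square.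
    + field; lra.
    + apply Rmult_le_pos; [apply Rlt_le, Rinv_0_lt_compat; lra | lra].
Qed.

Definition Lf (p l : C) (U E W : V3) : V3 :=
  vadd (vadd (vscal l U) (vscal (l*(l+p))%C E)) (vscal (l+p)%C W).

Lemma icross_opp k v : icross k (vopp v) = vopp (icross k v).
Proof. vring. Qed.

Lemma cross_icross beta k w : beta <> 0 ->
  vcross (ik k) w = vscal (RtoC beta) (icross (rscal (/ beta) k) w).
Proof.
  intros Hb. rewrite icross_ik.
  apply V3_eq; unfold vscal, mkV3; cbn [c1 c2 c3 fst snd];
  rewrite Cmult_assoc, <- RtoC_mult, Rinv_r by exact Hb; cring.
Qed.

Lemma diffq (x y z qq : C) : qq = 0%C -> (x - y = z * qq)%C -> x = y.
Proof. intros -> H. apply sub0. rewrite H. ring. Qed.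

Lemma deriv_id (a : R3) (r beta mu gamma s : R) (p l nn : C) (u E B : V3) :
  Nrm a = 1 -> beta <> 0 -> s = / beta * r * (/ beta * r) -> p = RtoC (mu * beta * s) ->
  q p (RtoC s) l = 0%C ->
  Lf p l (P a (vopp (vadd (vadd (vscal (RtoC gamma * nn)%C (ik (rscal r a))) (vscal (RtoC beta) E))
                          (vscal (RtoC (mu * r ^ 2)) u))))
         (P a (vadd (vcross (ik (rscal r a)) B) (vscal (RtoC beta) u)))
         (icross (rscal (/ beta) (rscal r a)) (P a (vopp (vcross (ik (rscal r a)) E))))
  = vscal (RtoC beta * l)%C (Lf p l (P a u) (P a E) (icross (rscal (/ beta) (rscal r a)) (P a B))).
Proof.
  intros HN Hb Hs Hp Hq.
  rewrite P_opp, !P_add, !P_scal, P_ik by exact HN. rewrite P_opp, !P_cross.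
  rewrite <- (cross_P a r B), <- (cross_P a r E).
  rewrite !(cross_icross beta (rscal r a)) by exact Hb.
  rewrite icross_opp, icross_scal, XX by exact HN. rewrite <- Hs.
  replace (mu * r ^ 2) with (beta * (mu * beta * s)) by (rewrite Hs; field; exact Hb).
  rewrite RtoC_mult, <- Hp.
  set (W := icross (rscal (/ beta) (rscal r a)) (P a B)). clearbody W.
  set (U := P a u). set (E' := P a E). clearbody U E'.
  unfold Lf. apply V3_eq; unfold vopp, vadd, vscal, mkV3; cbn [c1 c2 c3 fst snd].
  - apply (diffq _ _ (- RtoC beta * c1 E')%C _ Hq). unfold q. cring.
  - apply (diffq _ _ (- RtoC beta * c2 E')%C _ Hq). unfold q. cring.
  - apply (diffq _ _ (- RtoC beta * c3 E')%C _ Hq). unfold q. cring.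
Qed.

Close Scope C_scope.
Open Scope R_scope.

Lemma P_mat a : exists a11 a12 a13 a21 a22 a23 a31 a32 a33, forall v,
  P a v = matapp a11 a12 a13 a21 a22 a23 a31 a32 a33 v.
Proof.
  unfold P. set (kt := cv a).
  exists (1 - c1 kt * c1 kt)%C, (- c1 kt * c2 kt)%C, (- c1 kt * c3 kt)%C,
         (- c2 kt * c1 kt)%C, (1 - c2 kt * c2 kt)%C, (- c2 kt * c3 kt)%C,
         (- c3 kt * c1 kt)%C, (- c3 kt * c2 kt)%C, (1 - c3 kt * c3 kt)%C.
  intros v. unfold vsub, vadd, vopp, vscal, vdot, matapp, mkV3; cbn [c1 c2 c3 fst snd].
  f_equal; [f_equal|]; match goal with |- ?a = ?b => change (@eq C a b) end; ring.
Qed.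
Lemma VD_P a f t d : VD f t d -> VD (fun s => P a (f s)) t (P a d).
Proof.
  destruct (P_mat a) as (a11&a12&a13&a21&a22&a23&a31&a32&a33&H). intros Hf.
  rewrite H. eapply VD_ext; [intros s; symmetry; apply H|]. apply VD_mat; exact Hf.
Qed.
Lemma VL_P a f d : VL f d -> VL (fun s => P a (f s)) (P a d).
Proof.
  destruct (P_mat a) as (a11&a12&a13&a21&a22&a23&a31&a32&a33&H). intros Hf.
  rewrite H. eapply VL_ext; [intros s; symmetry; apply H|]. apply VL_mat; exact Hf.
Qed.

Lemma ode_mode (gamma beta mu : R) (n : R -> R3 -> C) (u E B : R -> R3 -> V3) (u0 E0 B0 : R3 -> V3)
  (k a : R3) (r s : R) (p l : C) :
  fourier_system gamma beta mu n u E B -> initial_data u u0 -> initial_data E E0 -> initial_data B B0 ->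
  Nrm a = 1 -> beta <> 0 -> k = rscal r a -> r = rnorm k -> s = / beta * r * (/ beta * r) ->
  p = RtoC (mu * beta * s) -> q p (RtoC s) l = 0%C ->
  forall t, 0 < t ->
  Lf p l (P a (u t k)) (P a (E t k)) (icross (rscal (/ beta) k) (P a (B t k)))
  = vscal (ex (beta * t) l) (Lf p l (P a (u0 k)) (P a (E0 k)) (icross (rscal (/ beta) k) (P a (B0 k)))).
Proof.
  intros Hsys Hu HE HB HN Hb Hk Hr Hs Hp Hq t Ht.
  set (f := fun s => Lf p l (P a (u s k)) (P a (E s k)) (icross (rscal (/ beta) k) (P a (B s k)))).
  assert (Hode := ode3 f (Lf p l (P a (u0 k)) (P a (E0 k)) (icross (rscal (/ beta) k) (P a (B0 k))))
                    (RtoC beta * l)%C).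
  replace (ex (beta * t) l) with (cexp (RtoC t * (RtoC beta * l))%C).
  2:{ unfold ex. f_equal. rewrite RtoC_mult. ring. }
  refine (Hode _ _ t Ht).
  - intros t' Ht'. destruct (Hsys t' k Ht') as (_ & Du & DE & DB & _ & _).
    unfold f, Lf. eapply VD_eq.
    + apply VD_add; [apply VD_add|]; apply VD_scal.
      * apply VD_P, VD_of, Du.
      * apply VD_P, VD_of, DE.
      * apply VD_icross, VD_P, VD_of, DB.
    + rewrite <- Hr in *. clear f Hode. subst k. try rewrite <- Hr.
      apply (deriv_id a r beta mu gamma s p l (n t' (rscal r a))); assumption.
  - unfold f, Lf.
    apply VL_add; [apply VL_add|]; apply VL_scal.
    + apply VL_P, VL_of, (proj2 (Hu k)).
    + apply VL_P, VL_of, (proj2 (HE k)).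
    + apply VL_icross, VL_P, VL_of, (proj2 (HB k)).
Qed.

Close Scope C_scope.
Open Scope R_scope.

Lemma RtoC_neq0 x : x <> 0 -> RtoC x <> 0%C.
Proof. intros H H'. apply H. apply (f_equal fst) in H'. exact H'. Qed.

Lemma root_p_neq (p S l : C) : q p S l = 0%C -> p <> 0%C -> (l + p <> 0)%C.
Proof.
  intros Hq Hp H. apply Hp. assert (Hl : l = (- p)%C).
  { transitivity ((l + p) - p)%C; [ring|]. rewrite H. ring. }
  subst l. transitivity (- q p S (- p))%C. unfold q; ring. rewrite Hq; ring.
Qed.
Lemma root_neq0 (p S l : C) : q p S l = 0%C -> p <> 0%C -> S <> 0%C -> l <> 0%C.
Proof.
  intros Hq Hp HS H. subst l. apply (Cmult_neq_0 p S Hp HS). rewrite <- Hq. unfold q. ring.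
Qed.

Theorem proposition3p2 (gamma beta mu : R) :
  0 < gamma -> 0 < beta -> 0 < mu ->
  exists S : list R,
  forall (n : R -> R3 -> C) (u E B : R -> R3 -> V3)
         (n0 : R3 -> C) (u0 E0 B0 : R3 -> V3),
    fourier_system gamma beta mu n u E B ->
    initial_data n n0 -> initial_data u u0 ->
    initial_data E E0 -> initial_data B B0 ->
    forall k : R3, k <> (0, 0, 0) -> ~ In (rnorm k) S ->
    forall l1 l2 l3 : C,
      roots_of_cubic (mu * beta) (rnorm (rscal (/ beta) k) ^ 2) l1 l2 l3 ->
      forall t : R, 0 < t ->
        (perp k (u t k), perp k (E t k), perp k (B t k))
        = Mapply l1 l2 l3 (beta * t) (rscal (/ beta) k)
                 (perp k (u0 k)) (perp k (E0 k)) (perp k (B0 k)).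
Proof.
  intros Hg Hb Hm.
  destruct (dcoef_roots (mu * beta)) as [L HL].
  exists (map (fun x => beta * sqrt x) L).
  intros n u E B n0 u0 E0 B0 Hsys Hn Hu HE HB k Hk HkS l1 l2 l3 Hroots t Ht.
  destruct (geom_facts k beta Hk Hb) as (Hr & HN & Hka & Hs & Hsq).
  rewrite !perp_P.
  set (r := rnorm k) in *.
  set (a := rscal (/ r) k) in *.
  set (xi := rscal (/ beta) k) in *.
  set (s := rnorm xi ^ 2) in *.
  assert (Hb0 : beta <> 0) by lra.
  assert (Hspos : 0 < s) by (rewrite Hs; apply Rmult_lt_0_compat; apply Rmult_lt_0_compat; auto; apply Rinv_0_lt_compat; lra).
  remember (RtoC (mu * beta * s)) as p eqn:Hpdef.
  remember (RtoC s) as S eqn:HSdef.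
  assert (Hp0 : p <> 0%C) by (rewrite Hpdef; apply RtoC_neq0; apply Rgt_not_eq; apply Rmult_lt_0_compat; [nra|lra]).
  assert (HS0 : S <> 0%C) by (rewrite HSdef; apply RtoC_neq0; lra).
  assert (E2 : RtoC (s + 1) = (S + 1)%C) by (rewrite HSdef, RtoC_plus; reflexivity).
  assert (E3 : RtoC (mu * beta * s ^ 2) = (p * S)%C) by (rewrite Hpdef, HSdef, <- RtoC_mult; f_equal; ring).
  assert (Hroots' : forall z : C, (z^3 + p*z^2 + (S+1)*z + p*S = (z-l1)*(z-l2)*(z-l3))%C).
  { intros z. specialize (Hroots z). rewrite E2, E3 in Hroots. rewrite <- Hpdef in Hroots. exact Hroots. }
  destruct (vieta p S l1 l2 l3 Hroots') as (Hs1 & Hs2 & Hq1 & Hq2 & Hq3).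
  assert (Hs3 : (l1*l2*l3 = - (p*S))%C).
  { assert (H0 := Hroots' 0%C). apply sub0. transitivity (((0^3 + p*0^2 + (S+1)*0 + p*S) - (0-l1)*(0-l2)*(0-l3)))%C.
    ring. rewrite H0. ring. }
  assert (HD : Dl l1 l2 l3 <> 0%C).
  { intros HD. assert (Hdisc := disc_gen l1 l2 l3 p (S+1) (p*S) Hs1 Hs2 Hs3).
    rewrite HD in Hdisc. assert (HR := disc_R (mu * beta) s). cbv zeta in HR.
    rewrite E2 in HR. replace (RtoC (mu * beta * s * s)) with (p * S)%C in HR
      by (rewrite Hpdef, HSdef, <- RtoC_mult; reflexivity).
    rewrite <- Hpdef in HR. rewrite HR in Hdisc.
    assert (Hz : peval (dcoef (mu * beta)) s = 0).
    { assert (H1 : RtoC (peval (dcoef (mu*beta)) s) = 0%C) by (rewrite <- Hdisc; ring).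
      apply (f_equal fst) in H1. exact H1. }
    apply HkS. rewrite <- Hsq. apply (in_map (fun x => beta * sqrt x)). apply HL, Hz. }
  assert (D12 : l1 <> l2) by (intros H; apply HD; rewrite H; unfold Dl; ring).
  assert (D23 : l2 <> l3) by (intros H; apply HD; rewrite H; unfold Dl; ring).
  assert (D13 : l1 <> l3) by (intros H; apply HD; rewrite H; unfold Dl; ring).
  assert (Hr' : r = rnorm k) by reflexivity.
  assert (Hmode : forall l, q p S l = 0%C ->
    Lf p l (P a (u t k)) (P a (E t k)) (icross xi (P a (B t k)))
    = vscal (ex (beta * t) l) (Lf p l (P a (u0 k)) (P a (E0 k)) (icross xi (P a (B0 k))))).
  { intros l Hql. rewrite HSdef in Hql. apply (ode_mode gamma beta mu n u E B u0 E0 B0 k a r s p l); auto. }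
  assert (G1 := Hmode l1 Hq1). assert (G2 := Hmode l2 Hq2). assert (G3 := Hmode l3 Hq3).
  subst S.
  set (U := P a (u t k)) in *. set (Ee := P a (E t k)) in *. set (PB := P a (B t k)) in *.
  set (U0 := P a (u0 k)) in *. set (E0' := P a (E0 k)) in *. set (PB0 := P a (B0 k)) in *.
  assert (XXs : forall w, icross xi (icross xi (P a w)) = vscal (RtoC s) (P a w)).
  { intros w. assert (Hxi : xi = rscal (/ beta) (rscal r a)) by (unfold xi; rewrite <- Hka; reflexivity).
    rewrite Hxi, XX by exact HN. rewrite <- Hs. reflexivity. }
  set (W := icross xi PB) in *. set (W0 := icross xi PB0) in *.
  set (tau := beta * t) in *.
  assert (Halg : forall (cc : V3 -> C),
     Vv p l1 (cc U) (cc Ee) (cc W) = (ex tau l1 * Vv p l1 (cc U0) (cc E0') (cc W0))%C ->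
     Vv p l2 (cc U) (cc Ee) (cc W) = (ex tau l2 * Vv p l2 (cc U0) (cc E0') (cc W0))%C ->
     Vv p l3 (cc U) (cc Ee) (cc W) = (ex tau l3 * Vv p l3 (cc U0) (cc E0') (cc W0))%C ->
     cc U = (m11 l1 l2 l3 tau * cc U0 + m12 l1 l2 l3 tau * cc E0' + m13 l1 l2 l3 tau * cc W0)%C /\
     cc Ee = (- m12 l1 l2 l3 tau * cc U0 + m22 l1 l2 l3 tau * cc E0' + m23 l1 l2 l3 tau * cc W0)%C /\
     cc W = (RtoC s * m13 l1 l2 l3 tau * cc U0 - RtoC s * m23 l1 l2 l3 tau * cc E0' + m33 l1 l2 l3 tau s * cc W0)%C).
  { intros cc F1 F2 F3. apply (alg_main l1 l2 l3 p s tau); auto.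
    - apply root_p_neq with (RtoC s); auto.
    - apply root_p_neq with (RtoC s); auto.
    - apply root_p_neq with (RtoC s); auto.
    - apply root_neq0 with p (RtoC s); auto.
    - apply root_neq0 with p (RtoC s); auto.
    - apply root_neq0 with p (RtoC s); auto. }
  destruct (Halg c1 (f_equal c1 G1) (f_equal c1 G2) (f_equal c1 G3)) as (X1 & Y1 & Z1).
  destruct (Halg c2 (f_equal c2 G1) (f_equal c2 G2) (f_equal c2 G3)) as (X2 & Y2 & Z2).
  destruct (Halg c3 (f_equal c3 G1) (f_equal c3 G2) (f_equal c3 G3)) as (X3 & Y3 & Z3).
  clear Halg.
  assert (HW : W = vadd (vadd (vscal (RtoC s * m13 l1 l2 l3 tau)%C U0) (vscal (- (RtoC s * m23 l1 l2 l3 tau))%C E0'))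
                        (vscal (m33 l1 l2 l3 tau s) W0)).
  { apply V3_eq; unfold vadd, vscal, mkV3; cbn [c1 c2 c3 fst snd]; [rewrite Z1|rewrite Z2|rewrite Z3]; cring. }
  assert (HX := f_equal (icross xi) HW).
  rewrite !icross_add, !icross_scal in HX.
  unfold W at 1, W0 in HX. unfold PB, PB0 in HX. rewrite !XXs in HX. fold PB PB0 in HX.
  assert (Hs0 : RtoC s <> 0%C) by (apply RtoC_neq0; lra).
  unfold Mapply. cbv zeta. fold xi. fold s.
  f_equal; [f_equal|].
  - apply V3_eq; [exact X1 | exact X2 | exact X3].
  - apply V3_eq; [exact Y1 | exact Y2 | exact Y3].
  - apply V3_eq; unfold vadd, vscal, mkV3; cbn [c1 c2 c3 fst snd].
    + apply sub0. apply (mul0 (RtoC s)); [|exact Hs0].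
      apply (f_equal c1) in HX. unfold vadd, vscal, mkV3 in HX; cbn [c1 c2 c3 fst snd] in HX.
      transitivity (RtoC s * c1 PB - RtoC s * m13 l1 l2 l3 tau * c1 (icross xi U0) - - (RtoC s * m23 l1 l2 l3 tau) * c1 (icross xi E0') - m33 l1 l2 l3 tau s * (RtoC s * c1 PB0))%C.
      * cring.
      * rewrite HX. cring.
    + apply sub0. apply (mul0 (RtoC s)); [|exact Hs0].
      apply (f_equal c2) in HX. unfold vadd, vscal, mkV3 in HX; cbn [c1 c2 c3 fst snd] in HX.
      transitivity (RtoC s * c2 PB - RtoC s * m13 l1 l2 l3 tau * c2 (icross xi U0) - - (RtoC s * m23 l1 l2 l3 tau) * c2 (icross xi E0') - m33 l1 l2 l3 tau s * (RtoC s * c2 PB0))%C.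
      * cring.
      * rewrite HX. cring.
    + apply sub0. apply (mul0 (RtoC s)); [|exact Hs0].
      apply (f_equal c3) in HX. unfold vadd, vscal, mkV3 in HX; cbn [c1 c2 c3 fst snd] in HX.
      transitivity (RtoC s * c3 PB - RtoC s * m13 l1 l2 l3 tau * c3 (icross xi U0) - - (RtoC s * m23 l1 l2 l3 tau) * c3 (icross xi E0') - m33 l1 l2 l3 tau s * (RtoC s * c3 PB0))%C.
      * cring.
      * rewrite HX. cring.
Qed.

Close Scope C_scope.
Open Scope R_scope.
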